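(* Let $m\ge 2$, $k\ge 2$, $n=km$, and let $O$ be an $n\times m$ sequence design. (a) If $X$ is an $n\times m$ LHD such that $D=(X,O)$ is marginally coupled, then, after some permutation of its rows, $O=(O_1^{T},\ldots,O_k^{T})^{T}$ where each $O_i$ is an $m\times m$ Latin square. (b) Conversely, if after some row permutation $O=(O_1^{T},\ldots,O_k^{T})^{T}$ with each $O_i$ an $m\times m$ Latin square, then there exists an $n\times m$ LHD $X$ such that $(X,O)$ is marginally coupled.
   Context: A sequence design is a matrix each of whose rows is a permutation of $\{1,\ldots,m\}$. An $n\times m$ LHD is a matrix each of whose columns is a permutation of $\{1,\ldots,n\}$. An $m\times m$ Latin square is a matrix each of whose rows and columns is a permutation of $\{1,\ldots,m\}$. For $n=km$, the QS design $D=(X,O)$ (same row indexing) is marginally coupled if $X$ is an LHD and for every column $u$ of $O$, every component $c\in\{1,\ldots,m\}$, and every column $j$ of $X$, the multiset $\{\lfloor (X_{rj}-1)/m\rfloor : O_{ru}=c\}$ equals $\{0,1,\ldots,k-1\}$ (each value exactly once); i.e., for each level of each factor in $O$ the corresponding points of $X$ form a small LHD after collapsing the $n$ levels to $k$ levels. *)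

(* Defs.v *)
From mathcomp Require Import all_boot all_order all_algebra all_fingroup.
Set Implicit Arguments. Unset Strict Implicit. Unset Printing Implicit Defensive.

Definition sequence_design (n m : nat) (O : 'M[nat]_(n, m)) : Prop :=
  forall r : 'I_n, perm_eq [seq O r j | j <- enum 'I_m] (iota 1 m).

Definition LHD (n m : nat) (X : 'M[nat]_(n, m)) : Prop :=
  forall j : 'I_m, perm_eq [seq X r j | r <- enum 'I_n] (iota 1 n).

Definition latin_square (m : nat) (L : 'M[nat]_(m, m)) : Prop :=
  (forall r : 'I_m, perm_eq [seq L r j | j <- enum 'I_m] (iota 1 m)) /\
  (forall j : 'I_m, perm_eq [seq L r j | r <- enum 'I_m] (iota 1 m)).

Definition marginally_coupled (k m : nat) (X : 'M[nat]_(k * m, m))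
    (O : 'M[nat]_(k * m, m)) : Prop :=
  LHD X /\
  forall (u : 'I_m) (c : nat) (j : 'I_m), 1 <= c <= m ->
    perm_eq [seq (X r j).-1 %/ m | r <- enum 'I_(k * m) & O r u == c]
            (iota 0 k).

Lemma blk_lt (k m : nat) (i : 'I_k) (a : 'I_m) : i * m + a < k * m.
Proof.
have Hi := ltn_ord i; have Ha := ltn_ord a.
apply: (@leq_trans (i * m + m)); first by rewrite ltn_add2l.
by rewrite -[X in _ + X]mul1n -mulnDl addn1 leq_mul2r Hi orbT.
Qed.

Definition blk (k m : nat) (i : 'I_k) (a : 'I_m) : 'I_(k * m) :=
  Ordinal (blk_lt i a).

Definition stacked_latin (k m : nat) (O : 'M[nat]_(k * m, m)) : Prop :=
  exists s : 'S_(k * m),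
    forall i : 'I_k, latin_square (\matrix_(a < m, b < m) O (s (blk i a)) b).

(* Main.v *)
Require Import Defs.
From mathcomp Require Import all_boot all_order all_algebra all_fingroup.

Lemma inj_of_uniq (T : finType) (U : eqType) (g : T -> U) :
  uniq [seq g a | a <- enum T] -> injective g.
Proof. by move=> H; apply/injectiveP. Qed.

Lemma cover_perm (m : nat) (s : seq nat) : size s = m ->
  (forall c, 1 <= c <= m -> c \in s) -> perm_eq s (iota 1 m).
Proof.
move=> Hs Hc; have U1 := iota_uniq 1 m.
have sub : {subset iota 1 m <= s}.
  by move=> x; rewrite mem_iota add1n ltnS => /Hc.
have [sz eq] : (size (iota 1 m) = size s) * (iota 1 m =i s).
  by apply: uniq_min_size => //; rewrite size_iota Hs.
rewrite perm_sym; apply: uniq_perm => //.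
by rewrite (uniq_size_uniq U1 eq) sz.
Qed.

Lemma uniq_perm_iota (k : nat) (s : seq nat) : uniq s ->
  (forall x, x \in s -> x < k) -> (forall x, x < k -> x \in s) ->
  perm_eq s (iota 0 k).
Proof.
move=> U H1 H2; apply: uniq_perm; rewrite ?iota_uniq // => x; rewrite mem_iota add0n /=.
by apply/idP/idP => [/H1|/H2].
Qed.

Theorem lemma4 (m k : nat) (hm : 2 <= m) (hk : 2 <= k)
    (O : 'M[nat]_(k * m, m)) (hO : sequence_design O) :
  (forall X : 'M[nat]_(k * m, m), marginally_coupled X O -> stacked_latin O) /\
  (stacked_latin O -> exists X : 'M[nat]_(k * m, m), marginally_coupled X O).
Proof.
have m0 : 0 < m by apply: leq_trans hm.
split.
- move=> X [HL HC].
  pose j0 : 'I_m := Ordinal m0.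
  have HLj := HL j0.
  have rng : forall r, 0 < X r j0 <= k * m.
    move=> r; have : X r j0 \in iota 1 (k * m).
      by rewrite -(perm_mem HLj); apply: map_f; rewrite mem_enum.
    by rewrite mem_iota add1n ltnS.
  have injX : injective (fun r => X r j0).
    by apply: inj_of_uniq; rewrite (perm_uniq HLj) iota_uniq.
  have fP : forall r, (X r j0).-1 < k * m.
    by move=> r; have /andP[h1 h2] := rng r; rewrite prednK.
  pose f r := Ordinal (fP r).
  have finj : injective f.
    move=> r r' /(congr1 val) /= E; apply: injX => /=.
    have /andP[h1 _] := rng r; have /andP[h1' _] := rng r'.
    by rewrite -(prednK h1) -(prednK h1') E.
  pose s := (perm finj)^-1%g.
  have key : forall r, s (f r) = r.
    by move=> r; rewrite /s -(permE finj) permK.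
  exists s => i; split.
  + move=> a; under eq_map do rewrite mxE; exact: hO.
  + move=> b; under eq_map do rewrite mxE.
    apply: cover_perm; first by rewrite size_map size_enum_ord.
    move=> c hc.
    have := HC b c j0 hc => /perm_mem P.
    have : (val i) \in [seq (X r j0).-1 %/ m | r <- enum 'I_(k * m) & O r b == c].
      by rewrite P mem_iota add0n ltn_ord.
    case/mapP => r; rewrite mem_filter => /andP[/eqP Orc _] Ei.
    pose a := Ordinal (ltn_pmod (val (f r)) m0).
    have Hb : blk i a = f r by apply: val_inj; rewrite /blk /= Ei -divn_eq.
    apply/mapP; exists a; first by rewrite mem_enum.
    by rewrite Hb key Orc.
- move=> [s Hlat].
  pose si := (s^-1)%g.
  exists ((\matrix_(r < k * m, j < m) (si r).+1)%R : 'M[nat]_(k * m, m)); split.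
  + move=> j; under eq_map do rewrite mxE.
    apply: cover_perm; first by rewrite size_map size_enum_ord.
    move=> c /andP[c1 c2].
    have cP : c.-1 < k * m by rewrite prednK.
    apply/mapP; exists (s (Ordinal cP)); first by rewrite mem_enum.
    by rewrite /si permK /= prednK.
  + move=> u c j hc.
    under eq_map do rewrite mxE /=.
    apply: uniq_perm_iota.
    * rewrite map_inj_in_uniq; first by rewrite filter_uniq // (enumT _) ?enum_uniq // ; have := enum_uniq (ordinal (k * m)); rewrite enumT.
      move=> r r'; rewrite !mem_filter => /andP[/eqP Or _] /andP[/eqP Or' _] E.
      have iP : si r %/ m < k by rewrite ltn_divLR // ltn_ord.
      pose i := Ordinal iP.
      pose a := Ordinal (ltn_pmod (val (si r)) m0).
      pose a' := Ordinal (ltn_pmod (val (si r')) m0).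
      have eqt : blk i a = si r by apply: val_inj; rewrite /blk /= -divn_eq.
      have eqt' : blk i a' = si r' by apply: val_inj; rewrite /blk /= E -divn_eq.
      have [_ Hcol] := Hlat i.
      have injc := @inj_of_uniq _ _ _ (etrans (perm_uniq (Hcol u)) (iota_uniq 1 m)).
      have aa : a = a'.
        apply: injc; rewrite /= !mxE eqt eqt' /si !permKV Or Or' //.
      apply: (@perm_inj _ (s^-1)%g); rewrite -eqt -eqt' aa //.
    * by move=> x /mapP [r _ ->]; rewrite ltn_divLR // ltn_ord.
    * move=> x hx; pose i := Ordinal hx.
      have [_ Hcol] := Hlat i.
      have : c \in [seq (\matrix_(a < m, b < m) O (s (blk i a)) b)%R r u | r <- enum 'I_m].
        by rewrite (perm_mem (Hcol u)) mem_iota add1n ltnS.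
      case/mapP => a _; rewrite mxE => Ec.
      apply/mapP; exists (s (blk i a)).
        by rewrite mem_filter mem_enum -Ec eqxx.
      by rewrite /si permK /blk /= divnMDl // divn_small // addn0.
Qed.
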